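(* Let $N\geq 0$ be an integer. For every real $t\neq 0$, \[ (-1)^N\left(\frac{\tanh t}{t}-\sum_{j=1}^{N}\frac{2^{2j}(2^{2j}-1)B_{2j}}{(2j)!}t^{2j-2}\right)>0 . \] In particular, for every integer $m\geq 1$ and real $t\neq0$, \[ \sum_{j=1}^{2m}\frac{2^{2j}(2^{2j}-1)B_{2j}}{(2j)!}t^{2j-2}<\frac{\tanh t}{t}<\sum_{j=1}^{2m-1}\frac{2^{2j}(2^{2j}-1)B_{2j}}{(2j)!}t^{2j-2}. \]
   Context: The Bernoulli numbers $B_n$ are defined by $\frac{t}{e^t-1}=\sum_{n=0}^\infty B_n\frac{t^n}{n!}$ for $|t|<2\pi$. An empty sum is understood to be zero. *)

(* Defs.v *)
From Stdlib Require Import Reals Arith.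
Open Scope R_scope.

(* The Bernoulli-number generating function property (paper's definition):
   t/(e^t-1) = sum_{n>=0} B_n t^n/n!  for 0 < |t| < 2*pi.
   (At t = 0 the left side is the removable value 1; we only require t <> 0.) *)
Definition bernoulli_gf (B : nat -> R) : Prop :=
  forall t : R, t <> 0 -> Rabs t < 2 * PI ->
    infinite_sum (fun n => B n * t ^ n / INR (fact n)) (t / (exp t - 1)).

Definition tanh_term (B : nat -> R) (j : nat) (t : R) : R :=
  2 ^ (2 * j)%nat * (2 ^ (2 * j)%nat - 1) * B (2 * j)%nat / INR (fact (2 * j)) * t ^ (2 * j - 2)%nat.

Fixpoint tanh_partial (B : nat -> R) (N : nat) (t : R) : R :=
  match N with
  | O => 0
  | S k => tanh_partial B k t + tanh_term B (S k) t
  end.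

(* Main.v *)
Require Import Defs.
From Coquelicot Require Import Coquelicot.
From Stdlib Require Import Reals Lra Lia Arith.
Open Scope R_scope.

Fixpoint fsum (f : nat -> R) (n : nat) : R :=
  match n with O => 0 | S n => fsum f n + f n end.

Lemma fsum_ext f g n : (forall i, (i < n)%nat -> f i = g i) -> fsum f n = fsum g n.
Proof. induction n; simpl; intros H; auto. rewrite IHn by (intros; apply H; lia). rewrite H by lia. auto. Qed.

Lemma fsum_plus f g n : fsum (fun i => f i + g i) n = fsum f n + fsum g n.
Proof. induction n; simpl; [lra|]. rewrite IHn; lra. Qed.

Lemma fsum_minus f g n : fsum (fun i => f i - g i) n = fsum f n - fsum g n.
Proof. induction n; simpl; [lra|]. rewrite IHn; lra. Qed.

Lemma fsum_scal c f n : fsum (fun i => c * f i) n = c * fsum f n.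
Proof. induction n; simpl; [lra|]. rewrite IHn; lra. Qed.

Lemma fsum_const c n : fsum (fun _ => c) n = INR n * c.
Proof. induction n; simpl fsum; [simpl; lra|]. rewrite IHn, S_INR; lra. Qed.

Lemma fsum_shift f n : fsum f (S n) = f O + fsum (fun i => f (S i)) n.
Proof. induction n; simpl in *; [lra|]. rewrite IHn; lra. Qed.

Lemma fsum_split f a b : fsum f (a + b) = fsum f a + fsum (fun i => f (a + i)%nat) b.
Proof. induction b; simpl. rewrite Nat.add_0_r; lra.
 rewrite Nat.add_succ_r; simpl. rewrite IHb; lra. Qed.

Lemma fsum_rev f n : fsum f n = fsum (fun i => f (n - 1 - i)%nat) n.
Proof. induction n; auto. rewrite (fsum_shift (fun i => f (S n - 1 - i)%nat)).
 simpl fsum at 1. rewrite IHn.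
 replace (S n - 1 - 0)%nat with n by lia. rewrite Rplus_comm. f_equal.
 apply fsum_ext. intros; f_equal; lia. Qed.

Lemma fsum_swap (g : nat -> nat -> R) n m :
  fsum (fun i => fsum (fun j => g i j) m) n = fsum (fun j => fsum (fun i => g i j) n) m.
Proof. induction n; simpl. clear. induction m; simpl; lra.
 rewrite IHn, <- fsum_plus. auto. Qed.

Lemma fsum_abs f n : Rabs (fsum f n) <= fsum (fun i => Rabs (f i)) n.
Proof. induction n; simpl. rewrite Rabs_R0; lra.
 eapply Rle_trans. apply Rabs_triang. lra. Qed.

Lemma fsum_le f g n : (forall i, (i < n)%nat -> f i <= g i) -> fsum f n <= fsum g n.
Proof. induction n; simpl; intros H; [lra|]. assert (f n <= g n) by (apply H; lia).
 assert (fsum f n <= fsum g n) by (apply IHn; intros; apply H; lia). lra. Qed.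

Lemma fsum_nonneg f n : (forall i, (i < n)%nat -> 0 <= f i) -> 0 <= fsum f n.
Proof. intros H. replace 0 with (fsum (fun _ => 0) n). apply fsum_le; auto.
 rewrite fsum_const; lra. Qed.

Lemma fsum_sum_f_R0 f n : fsum f (S n) = sum_f_R0 f n.
Proof. induction n; simpl in *; [lra|]. rewrite <- IHn. simpl. lra. Qed.

Lemma is_series_fsum f l :
  (forall eps, 0 < eps -> exists N, forall n, (n >= N)%nat -> Rabs (fsum f n - l) < eps) ->
  is_series f l.
Proof. intros H. apply is_series_Reals. intros eps He. destruct (H eps He) as [N HN].
 exists N. intros n Hn. unfold R_dist. rewrite <- fsum_sum_f_R0. apply HN. lia. Qed.

Lemma is_series_fsum_conv f l : is_series f l ->
  forall eps, 0 < eps -> exists N, forall n, (n >= N)%nat -> Rabs (fsum f n - l) < eps.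
Proof. intros H%is_series_Reals eps He. destruct (H eps He) as [N HN].
 exists (S N). intros n Hn. destruct n. lia. rewrite fsum_sum_f_R0. apply HN. lia. Qed.

Lemma is_series_fsum_comm (g : nat -> nat -> R) (L : nat -> R) N :
  (forall j, is_series (g j) (L j)) ->
  is_series (fun k => fsum (fun j => g j k) N) (fsum L N).
Proof. intros H. induction N; simpl.
 - apply (is_series_ext (fun _ => 0)). auto. apply is_series_Reals. intros e He; exists O; intros.
   unfold R_dist. assert (Z: forall m, sum_f_R0 (fun _ => 0) m = 0).
   { clear. induction m; simpl; [lra|]. rewrite IHm; lra. }
   rewrite Z, Rminus_0_r, Rabs_R0; auto.
 - apply (is_series_plus _ _ _ _ IHN (H N)).
Qed.

Lemma zero_of_geom x C r : 0 <= r < 1 -> (forall L, Rabs x <= C * r ^ L) -> x = 0.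
Proof. intros Hr H. destruct (Req_dec x 0) as [|Hx]; auto. exfalso.
 assert (HC: 0 < C). { specialize (H O). rewrite pow_O, Rmult_1_r in H. pose proof (Rabs_pos_lt x Hx). lra. }
 destruct (pow_lt_1_zero r) with (y := Rabs x / C) as [N HN].
 rewrite Rabs_pos_eq; lra. apply Rdiv_lt_0_compat; auto. apply Rabs_pos_lt; auto.
 specialize (HN N (le_n _)). specialize (H N). rewrite Rabs_pos_eq in HN by (apply pow_le; lra).
 apply (Rmult_lt_compat_l C) in HN; auto. replace (C * (Rabs x / C)) with (Rabs x) in HN by (field; lra).
 lra. Qed.

Lemma fsum_telescope g n : fsum (fun k => g (S k) - g k) n = g n - g O.
Proof. induction n; simpl; [lra|]. rewrite IHn; lra. Qed.

Lemma fsum_opp f n : fsum (fun i => - f i) n = - fsum f n.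
Proof. induction n; simpl; [lra|]. rewrite IHn; lra. Qed.

Definition phi (n k : nat) : R := (2 * INR k + 1) * PI / INR n.
Definition Cs (n m : nat) : R := fsum (fun k => cos (INR m * phi n k)) n.

Lemma Cs_zero n m : (0 < m < n)%nat -> Cs n m = 0.
Proof. intros Hm. unfold Cs.
 set (th := INR m * PI / INR n).
 assert (Hn: 0 < INR n) by (apply lt_0_INR; lia).
 assert (Hth: 0 < th < PI).
 { unfold th. assert (0 < INR m) by (apply lt_0_INR; lia). assert (INR m < INR n) by (apply lt_INR; lia).
   pose proof PI_RGT_0. split. apply Rdiv_lt_0_compat; nra.
   apply Rmult_lt_reg_r with (INR n); auto. field_simplify; nra. }
 assert (Hs: 0 < sin th) by (apply sin_gt_0; lra).
 apply Rmult_eq_reg_l with (2 * sin th); [|lra]. rewrite Rmult_0_r.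
 rewrite <- fsum_scal.
 rewrite (fsum_ext _ (fun k => (fun j => sin (2 * INR j * th)) (S k) - (fun j => sin (2 * INR j * th)) k)).
 - rewrite (fsum_telescope (fun j => sin (2 * INR j * th))). simpl. rewrite Rmult_0_r, Rmult_0_l, sin_0.
   apply Rminus_diag_eq. apply sin_eq_0_1. exists (2 * Z.of_nat m)%Z.
   rewrite mult_IZR, <- INR_IZR_INZ. unfold th. field. lra.
 - intros i _. rewrite S_INR. unfold phi.
   replace (INR m * ((2 * INR i + 1) * PI / INR n)) with ((2 * INR i + 1) * th) by (unfold th; field; lra).
   replace (2 * (INR i + 1) * th) with ((2 * INR i + 1) * th + th) by ring.
   replace (2 * INR i * th) with ((2 * INR i + 1) * th - th) by ring.
   rewrite sin_plus, sin_minus. ring.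
Qed.

Lemma Cs_0 n : Cs n 0 = INR n.
Proof. unfold Cs. rewrite (fsum_ext _ (fun _ => 1)). rewrite fsum_const; lra.
 intros; simpl; rewrite Rmult_0_l; apply cos_0. Qed.

Lemma Cs_shift n m : (0 < n)%nat -> Cs n (n + m) = - Cs n m.
Proof. intros Hn. unfold Cs. rewrite <- fsum_opp.
 apply fsum_ext. intros k _. unfold phi. rewrite plus_INR.
 assert (0 < INR n) by (apply lt_0_INR; lia).
 replace ((INR n + INR m) * ((2 * INR k + 1) * PI / INR n)) with
   ((INR m * ((2 * INR k + 1) * PI / INR n) + PI) + 2 * INR k * PI) by (field; lra).
 rewrite cos_period, neg_cos. ring. Qed.

Definition SM (q ph : R) (M : nat) : R := fsum (fun m => q ^ m * cos (INR m * ph)) M.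

Lemma SM_closed q ph M :
  (1 - 2 * q * cos ph + q ^ 2) * SM q ph M =
  1 - q * cos ph - q ^ M * cos (INR M * ph) + q ^ (S M) * cos (INR M * ph - ph).
Proof. induction M; unfold SM in *; simpl fsum.
 - simpl. rewrite Rmult_0_l, cos_0, Rminus_0_l, cos_neg. ring.
 - rewrite Rmult_plus_distr_l, IHM. rewrite S_INR.
   replace ((INR M + 1) * ph - ph) with (INR M * ph) by ring.
   replace ((INR M + 1) * ph) with (INR M * ph + ph) by ring.
   rewrite cos_plus, cos_minus. simpl. ring.
Qed.

Lemma swap_SM q n M :
  fsum (fun k => SM q (phi n k) M) n = fsum (fun m => q ^ m * Cs n m) M.
Proof. unfold SM, Cs. rewrite fsum_swap. apply fsum_ext. intros. rewrite fsum_scal. auto. Qed.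

Lemma T_closed q n L : (0 < n)%nat ->
  (1 + q ^ n) * fsum (fun m => q ^ m * Cs n m) (n * L) = INR n * (1 - (- q ^ n) ^ L).
Proof. intros Hn. induction L.
 - rewrite Nat.mul_0_r. simpl. ring.
 - replace (n * S L)%nat with (n + n * L)%nat by lia. rewrite fsum_split.
   destruct n as [|n']; [lia|].
   rewrite fsum_shift. rewrite (fsum_ext _ (fun _ => 0)).
   2:{ intros i Hi. rewrite Cs_zero by lia. ring. }
   rewrite fsum_const, Cs_0.
   rewrite (fsum_ext _ (fun i => - q ^ S n' * (q ^ i * Cs (S n') i))).
   2:{ intros i _. rewrite Cs_shift by lia. rewrite pow_add. ring. }
   rewrite fsum_scal.
   set (T := fsum (fun i => q ^ i * Cs (S n') i) (S n' * L)) in *.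
   transitivity ((1 + q ^ S n') * INR (S n') - q ^ S n' * ((1 + q ^ S n') * T)). simpl pow; ring.
   rewrite IHL. simpl. ring.
Qed.

Definition Pk (q ph : R) : R := (1 - q * cos ph) / (1 - 2 * q * cos ph + q ^ 2).

Lemma D_pos q ph : 0 <= q < 1 -> (1 - q) ^ 2 <= 1 - 2 * q * cos ph + q ^ 2.
Proof. intros Hq. pose proof (COS_bound ph). nra. Qed.

Lemma Pk_sum q n : 0 <= q < 1 -> (0 < n)%nat ->
  fsum (fun k => Pk q (phi n k)) n = INR n / (1 + q ^ n).
Proof. intros Hq Hn.
 assert (Hqn: 0 <= q ^ n) by (apply pow_le; lra).
 assert (Hqn1: q ^ n < 1). { apply pow_lt_1_compat; [lra|lia]. }
 assert (H1q: 0 < (1 - q) ^ 2) by (apply pow_lt; lra).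
 apply Rminus_diag_uniq.
 apply (zero_of_geom _ (INR n * (2 / (1 - q) ^ 2) + INR n) (q ^ n)); [lra|].
 intros L.
 assert (E: fsum (fun k => Pk q (phi n k)) n - INR n / (1 + q ^ n) =
   fsum (fun k => Pk q (phi n k) - SM q (phi n k) (n * L)) n
   + (fsum (fun m => q ^ m * Cs n m) (n * L) - INR n / (1 + q ^ n))).
 { rewrite fsum_minus, swap_SM. ring. }
 rewrite E, Rmult_plus_distr_r. eapply Rle_trans. apply Rabs_triang. apply Rplus_le_compat.
 - eapply Rle_trans. apply fsum_abs.
   replace (INR n * (2 / (1 - q) ^ 2) * (q ^ n) ^ L) with (fsum (fun _ => 2 / (1 - q) ^ 2 * (q ^ n) ^ L) n) by (rewrite fsum_const; ring).
   apply fsum_le. intros k _. set (ph := phi n k). set (M := (n * L)%nat).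
   pose proof (D_pos q ph Hq). pose proof (SM_closed q ph M).
   assert (Dp: 0 < 1 - 2 * q * cos ph + q ^ 2) by lra.
   assert (Ek: Pk q ph - SM q ph M = (q ^ M * cos (INR M * ph) - q ^ S M * cos (INR M * ph - ph)) / (1 - 2 * q * cos ph + q ^ 2)).
   { unfold Pk. apply Rmult_eq_reg_l with (1 - 2 * q * cos ph + q ^ 2); [|lra].
     field_simplify; try lra. }
   rewrite Ek. rewrite Rabs_div by lra. rewrite (Rabs_pos_eq (_ + _)) by lra.
   assert (Hq': q ^ M = (q ^ n) ^ L) by (unfold M; apply pow_mult).
   assert (Hb: Rabs (q ^ M * cos (INR M * ph) - q ^ S M * cos (INR M * ph - ph)) <= 2 * (q ^ n) ^ L).
   { rewrite <- Hq'. pose proof (COS_bound (INR M * ph)). pose proof (COS_bound (INR M * ph - ph)).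
     assert (0 <= q ^ M) by (apply pow_le; lra).
     assert (q ^ S M <= q ^ M) by (simpl; nra). assert (0 <= q ^ S M) by (apply pow_le; lra).
     apply Rabs_le; split; nra. }
   unfold Rdiv. apply Rle_trans with (2 * (q ^ n) ^ L * / (1 - q) ^ 2).
   apply Rmult_le_compat; try lra. apply Rabs_pos. left; apply Rinv_0_lt_compat; lra.
   apply Rinv_le_contravar; lra. right; field. lra.
 - assert (Hp: 0 < 1 + q ^ n) by lra.
   replace (fsum (fun m => q ^ m * Cs n m) (n * L) - INR n / (1 + q ^ n)) with
     (((1 + q ^ n) * fsum (fun m => q ^ m * Cs n m) (n * L) - INR n) / (1 + q ^ n)) by (field; lra).
   rewrite T_closed by auto.
   replace (INR n * (1 - (- q ^ n) ^ L) - INR n) with (- (INR n * (- q ^ n) ^ L)) by ring.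
   rewrite Rabs_div by lra. rewrite Rabs_Ropp, Rabs_mult, <- RPow_abs, Rabs_Ropp.
   rewrite (Rabs_pos_eq (INR n)) by apply pos_INR. rewrite (Rabs_pos_eq (q ^ n)) by lra.
   rewrite (Rabs_pos_eq (1 + _)) by lra.
   assert (0 <= INR n * (q ^ n) ^ L) by (apply Rmult_le_pos; [apply pos_INR|apply pow_le; lra]).
   apply Rmult_le_reg_r with (1 + q ^ n); [lra|]. unfold Rdiv. rewrite Rmult_assoc, Rinv_l by lra.
   nra.
Qed.

Lemma exp_pow x n : exp x ^ n = exp (INR n * x).
Proof. induction n. simpl. rewrite Rmult_0_l, exp_0; auto.
 rewrite S_INR. simpl pow. rewrite IHn. rewrite <- exp_plus. f_equal. ring. Qed.

Lemma tanh_exp z : tanh z = (1 - exp (- z) ^ 2) / (1 + exp (- z) ^ 2).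
Proof. unfold tanh, sinh, cosh.
 assert (exp z * exp (- z) = 1) by (rewrite <- exp_plus, Rplus_opp_r, exp_0; auto).
 pose proof (exp_pos z). pose proof (exp_pos (- z)).
 assert (0 < exp (- z) ^ 2) by (apply pow_lt; auto).
 apply Rmult_eq_reg_r with ((exp z + exp (- z)) / 2 * (1 + exp (- z) ^ 2)).
 2:{ apply Rgt_not_eq. apply Rmult_lt_0_compat; lra. }
 field_simplify; try lra. simpl. nra. Qed.

Lemma hyp_term y ph : 0 < y ->
  sinh y / (cosh y - cos ph) = 2 * Pk (exp (- y)) ph - 1.
Proof. intros Hy. unfold Pk, sinh, cosh. set (c := cos ph). assert (Hc: c <= 1) by apply COS_bound.
 set (E := exp y). assert (HE: 1 < E). { unfold E. rewrite <- exp_0. apply exp_increasing; auto. }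
 replace (exp (- y)) with (/ E) by (unfold E; rewrite exp_Ropp; auto).
 assert (H1: 0 < (E + / E) / 2 - c).
 { assert (E + / E > 2). { apply Rmult_lt_reg_r with E. lra. rewrite Rmult_plus_distr_r, Rinv_l by lra. nra. } lra. }
 assert (H2: 0 < 1 - 2 * / E * c + / E ^ 2).
 { replace (1 - 2 * / E * c + / E ^ 2) with (((E + / E) / 2 - c) * (2 / E)) by (field; lra).
   apply Rmult_lt_0_compat; auto. apply Rdiv_lt_0_compat; lra. }
 apply Rmult_eq_reg_r with (((E + / E) / 2 - c) * (1 - 2 * / E * c + / E ^ 2)).
 2:{ apply Rgt_not_eq. apply Rmult_lt_0_compat; auto. }
 assert (H3: 0 < E * E + 1 - c * (E * 2)).
 { replace (E * E + 1 - c * (E * 2)) with (2 * E * ((E + / E) / 2 - c)) by (field; lra).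
   apply Rmult_lt_0_compat; lra. }
 field_simplify; try (split; nra). Qed.

Lemma hyp_sum y n : 0 < y -> (0 < n)%nat ->
  fsum (fun k => sinh y / (cosh y - cos (phi n k))) n = INR n * tanh (INR n * y / 2).
Proof. intros Hy Hn.
 rewrite (fsum_ext _ (fun k => 2 * Pk (exp (- y)) (phi n k) - 1)).
 2:{ intros. apply hyp_term; auto. }
 rewrite fsum_minus, fsum_scal, fsum_const.
 assert (Hq: 0 <= exp (- y) < 1). { split. left; apply exp_pos. rewrite <- exp_0. apply exp_increasing. lra. }
 rewrite Pk_sum; auto. rewrite exp_pow, tanh_exp, exp_pow.
 replace (INR 2 * - (INR n * y / 2)) with (INR n * - y) by (change (INR 2) with 2; field).
 pose proof (exp_pos (INR n * - y)). field. lra. Qed.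

Definition hterm (t : R) (m k : nat) : R :=
  sinh (t / INR m) / (INR m * (cosh (t / INR m) - cos ((2 * INR k + 1) * PI / (2 * INR m)))).

Lemma tanh_finite t m : 0 < t -> (0 < m)%nat -> tanh t = fsum (hterm t m) m.
Proof. intros Ht Hm.
 assert (Hmr: 0 < INR m) by (apply lt_0_INR; auto).
 pose proof (hyp_sum (t / INR m) (m + m) ltac:(apply Rdiv_lt_0_compat; auto) ltac:(lia)) as H.
 rewrite plus_INR in H. replace ((INR m + INR m) * (t / INR m) / 2) with t in H by (field; lra).
 set (g := fun k => sinh (t / INR m) / (cosh (t / INR m) - cos (phi (m + m) k))) in H.
 change (fsum g (m + m) = (INR m + INR m) * tanh t) in H.
 rewrite fsum_split in H. rewrite (fsum_rev (fun i => g (m + i)%nat)) in H.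
 rewrite (fsum_ext (fun i => g (m + (m - 1 - i))%nat) g) in H.
 2:{ intros i Hi. unfold g. do 2 f_equal. unfold phi. rewrite !plus_INR.
     rewrite !minus_INR by lia. simpl INR.
     replace ((2 * (INR m + (INR m - 1 - INR i)) + 1) * PI / (INR m + INR m)) with
       (- ((2 * INR i + 1) * PI / (INR m + INR m)) + 2 * INR 1 * PI) by (simpl; field; lra).
     rewrite cos_period, cos_neg. auto. }
 assert (E: fsum g m = INR m * tanh t) by lra.
 apply Rmult_eq_reg_l with (INR m); [|lra]. rewrite <- E, <- fsum_scal.
 apply fsum_ext. intros k _. unfold g, hterm, phi. rewrite plus_INR.
 replace (INR m + INR m) with (2 * INR m) by ring. field.
 split; [|lra]. apply Rgt_not_eq.
 assert (1 < cosh (t / INR m)).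
 { unfold cosh. set (u := t / INR m). assert (0 < u) by (apply Rdiv_lt_0_compat; auto).
   assert (exp u * exp (- u) = 1) by (rewrite <- exp_plus, Rplus_opp_r, exp_0; auto).
   assert (1 < exp u) by (rewrite <- exp_0; apply exp_increasing; auto).
   pose proof (exp_pos (- u)). nra. }
 pose proof (COS_bound ((2 * INR k + 1) * PI / (2 * INR m))). lra.
Qed.

Lemma finite_limits (h : nat -> nat -> R) (f : nat -> R) n :
  (forall k, Un_cv (fun p => h (S p) k) (f k)) ->
  forall eps, 0 < eps -> exists P, forall p k, (p >= P)%nat -> (k < n)%nat -> Rabs (h (S p) k - f k) < eps.
Proof. intros Hl eps He. induction n.
 - exists O. intros; lia.
 - destruct IHn as [P1 H1]. destruct (Hl n eps He) as [P2 H2].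
   exists (max P1 P2). intros p k Hp Hk. destruct (Nat.eq_dec k n) as [->|].
   + apply H2. lia.
   + apply H1; lia.
Qed.

Lemma lim_bound (u : nat -> R) l b : Un_cv u l -> (forall p, Rabs (u p) <= b) -> Rabs l <= b.
Proof. intros Hl Hb. destruct (Rle_dec (Rabs l) b) as [|Hn]; auto. exfalso.
 destruct (Hl (Rabs l - b)) as [N HN]. lra. specialize (HN N (le_n _)). specialize (Hb N).
 unfold R_dist in HN. pose proof (Rabs_triang_inv l (u N)). rewrite <- Rabs_Ropp in HN.
 replace (- (u N - l)) with (l - u N) in HN by ring. lra. Qed.

Lemma tannery (h : nat -> nat -> R) (f M : nat -> R) (c : R) :
  ex_series M ->
  (forall m k, (k < m)%nat -> Rabs (h m k) <= M k) ->
  (forall k, Un_cv (fun p => h (S p) k) (f k)) ->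
  (forall m, (0 < m)%nat -> fsum (h m) m = c) ->
  is_series f c.
Proof. intros [SM HSM] Hb Hl Hc.
 pose proof (is_series_fsum_conv _ _ HSM) as HC.
 apply is_series_fsum. intros eps He.
 destruct (HC (eps / 6)) as [K0 HK0]. lra.
 exists K0. intros n Hn.
 assert (He2: 0 < eps / (3 * (INR n + 1))).
 { apply Rdiv_lt_0_compat; auto. pose proof (pos_INR n); lra. }
 destruct (finite_limits h f n Hl _ He2) as [P HP].
 set (m := S (max P n)).
 rewrite <- (Hc m) by (unfold m; lia).
 replace m with (n + (m - n))%nat by (unfold m; lia). rewrite fsum_split.
 replace (fsum f n - (fsum (h (n + (m - n))%nat) n + fsum (fun i => h (n + (m - n))%nat (n + i)%nat) (m - n)))
   with (- fsum (fun k => h (n + (m - n))%nat k - f k) n + - fsum (fun i => h (n + (m - n))%nat (n + i)%nat) (m - n))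
   by (rewrite fsum_minus; ring).
 replace (n + (m - n))%nat with m by (unfold m; lia).
 eapply Rle_lt_trans. apply Rabs_triang. rewrite !Rabs_Ropp.
 assert (A1: Rabs (fsum (fun k => h m k - f k) n) <= INR n * (eps / (3 * (INR n + 1)))).
 { eapply Rle_trans. apply fsum_abs. rewrite <- fsum_const. apply fsum_le.
   intros k Hk. left. unfold m. apply HP; lia. }
 assert (A2: Rabs (fsum (fun i => h m (n + i)%nat) (m - n)) <= fsum M m - fsum M n).
 { eapply Rle_trans. apply fsum_abs.
   replace (fsum M m - fsum M n) with (fsum (fun i => M (n + i)%nat) (m - n)).
   apply fsum_le. intros i Hi. apply Hb. lia.
   replace m with (n + (m - n))%nat at 2 by (unfold m; lia). rewrite fsum_split. ring. }
 assert (A3: fsum M m - fsum M n < eps / 3).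
 { pose proof (HK0 m ltac:(unfold m; lia)). pose proof (HK0 n Hn).
   apply Rabs_def2 in H. apply Rabs_def2 in H0. lra. }
 assert (A4: INR n * (eps / (3 * (INR n + 1))) < eps / 3).
 { pose proof (pos_INR n). apply Rmult_lt_reg_r with (3 * (INR n + 1)). lra.
   field_simplify; try lra; try nra. }
 lra.
Qed.

Lemma deriv_seq_lim f a : f 0 = 0 -> derivable_pt_lim f 0 1 ->
  is_lim_seq (fun p => INR (S p) * f (a / INR (S p))) a.
Proof. intros H0 Hd. apply is_lim_seq_Reals. intros eps He.
 destruct (Req_dec a 0) as [->|Ha].
 - exists O. intros p _. unfold R_dist. replace (0 / INR (S p)) with 0.
   rewrite H0. rewrite Rmult_0_r, Rminus_0_r, Rabs_R0; auto.
   pose proof (lt_0_INR (S p) ltac:(lia)). field; lra.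
 - assert (Hpa: 0 < Rabs a) by (apply Rabs_pos_lt; auto).
   destruct (Hd (eps / Rabs a)) as [d Hdd]. apply Rdiv_lt_0_compat; auto.
   destruct (INR_unbounded (Rabs a / d)) as [N HN].
   exists N. intros p Hp. unfold R_dist.
   assert (Hp1: 0 < INR (S p)) by (apply lt_0_INR; lia).
   assert (INR N <= INR (S p)) by (apply le_INR; lia).
   set (h := a / INR (S p)).
   assert (Hh: h <> 0) by (unfold h, Rdiv; apply Rmult_integral_contrapositive_currified; [auto | apply Rinv_neq_0_compat; lra]).
   assert (Hhd: Rabs h < d).
   { unfold h. rewrite Rabs_div by lra. rewrite (Rabs_pos_eq (INR (S p))) by lra.
     pose proof (cond_pos d).
     assert (E1: Rabs a / d * d = Rabs a) by (field; lra).
     assert (E2: Rabs a < d * INR (S p)) by nra.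
     apply Rmult_lt_reg_r with (INR (S p)); auto.
     replace (Rabs a / INR (S p) * INR (S p)) with (Rabs a) by (field; lra). lra. }
   specialize (Hdd h Hh Hhd). rewrite Rplus_0_l, H0, Rminus_0_r in Hdd.
   replace (INR (S p) * f h - a) with (a * (f h / h - 1)) by (unfold h; field; lra).
   rewrite Rabs_mult. apply Rmult_lt_reg_l with (/ Rabs a). apply Rinv_0_lt_compat; auto.
   rewrite <- Rmult_assoc, Rinv_l by lra. rewrite Rmult_1_l. unfold Rdiv in Hdd. lra.
Qed.

Lemma lim_sin a : is_lim_seq (fun p => INR (S p) * sin (a / INR (S p))) a.
Proof. apply deriv_seq_lim. apply sin_0. rewrite <- cos_0. apply derivable_pt_lim_sin. Qed.

Lemma lim_sinh a : is_lim_seq (fun p => INR (S p) * sinh (a / INR (S p))) a.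
Proof. apply deriv_seq_lim. apply sinh_0.
 replace 1 with (cosh 0). apply derivable_pt_lim_sinh. unfold cosh. rewrite Ropp_0, exp_0. field. Qed.

Lemma exp_half u : exp (u / 2) * exp (u / 2) = exp u.
Proof. rewrite <- exp_plus. f_equal. field. Qed.

Lemma cosh_half u : cosh u = 1 + 2 * sinh (u / 2) ^ 2.
Proof. unfold cosh, sinh. rewrite <- (exp_half u), <- (exp_half (- u)).
 replace (- u / 2) with (- (u / 2)) by field.
 assert (exp (u / 2) * exp (- (u / 2)) = 1) by (rewrite <- exp_plus, Rplus_opp_r, exp_0; auto).
 simpl. nra. Qed.

Lemma cos_half v : cos v = 1 - 2 * sin (v / 2) ^ 2.
Proof. replace v with (2 * (v / 2)) at 1 by field. rewrite cos_2a_sin. simpl. ring. Qed.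

Lemma cosh_gt1 u : 0 < u -> 1 < cosh u.
Proof. intros Hu. rewrite cosh_half. assert (0 < sinh (u / 2)).
 { unfold sinh. assert (exp (- (u/2)) < exp (u / 2)) by (apply exp_increasing; lra). lra. }
 nra. Qed.

Lemma sinh_nonneg u : 0 <= u -> 0 <= sinh u.
Proof. intros. unfold sinh. assert (exp (- u) <= exp u).
 { destruct (Req_dec u 0). subst. rewrite Ropp_0; lra. left; apply exp_increasing; lra. } lra. Qed.

Lemma sinh_pos u : 0 < u -> 0 < sinh u.
Proof. intros. unfold sinh. assert (exp (- u) < exp u) by (apply exp_increasing; lra). lra. Qed.

Lemma cosh_ge1 u : 1 <= cosh u.
Proof. rewrite cosh_half. pose proof (pow2_ge_0 (sinh (u / 2))). lra. Qed.

Lemma sinh_plus' a b : sinh (a + b) = sinh a * cosh b + cosh a * sinh b.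
Proof. unfold sinh, cosh. rewrite Ropp_plus_distr, !exp_plus. field. Qed.

Lemma sinh_mult_le u m : 0 <= u -> INR m * sinh u <= sinh (INR m * u).
Proof. intros Hu. induction m. simpl. rewrite !Rmult_0_l, sinh_0; lra.
 rewrite S_INR. replace ((INR m + 1) * u) with (INR m * u + u) by ring. rewrite sinh_plus'.
 pose proof (cosh_ge1 u). pose proof (cosh_ge1 (INR m * u)). pose proof (sinh_nonneg u Hu).
 pose proof (sinh_nonneg (INR m * u) ltac:(apply Rmult_le_pos; auto; apply pos_INR)). nra. Qed.

Lemma hterm_eq t m k : 0 < t -> (0 < m)%nat ->
  hterm t m k = (INR m * sinh (t / INR m)) /
    (2 * (INR m * sinh (t / 2 / INR m)) ^ 2 + 2 * (INR m * sin ((2 * INR k + 1) * PI / 4 / INR m)) ^ 2).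
Proof. intros Ht Hm. assert (Hmr: 0 < INR m) by (apply lt_0_INR; auto).
 unfold hterm. rewrite cosh_half, cos_half.
 replace (t / INR m / 2) with (t / 2 / INR m) by (field; lra).
 replace ((2 * INR k + 1) * PI / (2 * INR m) / 2) with ((2 * INR k + 1) * PI / 4 / INR m) by (field; lra).
 assert (0 < sinh (t / 2 / INR m)) by (apply sinh_pos; apply Rdiv_lt_0_compat; lra).
 set (s1 := sinh (t / 2 / INR m)) in *. set (s2 := sin ((2 * INR k + 1) * PI / 4 / INR m)).
 assert (0 < s1 ^ 2) by (apply pow_lt; auto). pose proof (pow2_ge_0 s2).
 assert (0 < (INR m * s1) ^ 2) by (apply pow_lt; nra). pose proof (pow2_ge_0 (INR m * s2)).
 field. repeat split; lra.
Qed.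

Lemma is_series_zero : is_series (fun _ => 0) 0.
Proof. apply is_series_fsum. intros e He. exists O. intros. rewrite fsum_const, Rmult_0_r, Rminus_0_r, Rabs_R0; auto. Qed.

Lemma hterm_lim t k : 0 < t ->
  Un_cv (fun p => hterm t (S p) k) (8 * t / (4 * t ^ 2 + ((2 * INR k + 1) * PI) ^ 2)).
Proof. intros Ht. apply is_lim_seq_Reals.
 set (al := (2 * INR k + 1) * PI / 4).
 pose proof (lim_sinh t) as HA. pose proof (lim_sinh (t / 2)) as HB. pose proof (lim_sin al) as HC.
 pose proof (is_lim_seq_mult' _ _ _ _ HB HB) as HB2. pose proof (is_lim_seq_mult' _ _ _ _ HC HC) as HC2.
 pose proof (is_lim_seq_mult' _ _ _ _ (is_lim_seq_const 2) HB2) as HB3.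
 pose proof (is_lim_seq_mult' _ _ _ _ (is_lim_seq_const 2) HC2) as HC3.
 pose proof (is_lim_seq_plus' _ _ _ _ HB3 HC3) as HD.
 assert (Hal: 0 < al) by (unfold al; pose proof PI_RGT_0; pose proof (pos_INR k); apply Rdiv_lt_0_compat; nra).
 assert (Hne: 2 * (t / 2 * (t / 2)) + 2 * (al * al) <> 0) by nra.
 pose proof (is_lim_seq_div' _ _ _ _ HA HD Hne) as H.
 replace (8 * t / (4 * t ^ 2 + ((2 * INR k + 1) * PI) ^ 2)) with (t / (2 * (t / 2 * (t / 2)) + 2 * (al * al))).
 - eapply is_lim_seq_ext; [|exact H]. intros p. simpl. rewrite hterm_eq by (auto; lia).
   unfold al. simpl pow. rewrite !Rmult_1_r. auto.
 - unfold al. pose proof PI_RGT_0. pose proof (pos_INR k). field. split; nra.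
Qed.

Lemma sin_ge_third x : 0 <= x <= 2 -> x / 3 <= sin x.
Proof. intros Hx. pose proof PI2_3_2. destruct (sin_bound x 0) as [Hs _]; [lra|lra|].
 simpl in Hs. unfold sin_approx, sin_term in Hs. simpl in Hs. nra. Qed.

Lemma hterm_bound t m k : 0 < t -> (k < m)%nat ->
  0 <= hterm t m k <= sinh t / (2 * ((2 * INR k + 1) * PI / 12) ^ 2).
Proof. intros Ht Hk. assert (Hm: (0 < m)%nat) by lia. assert (Hmr: 0 < INR m) by (apply lt_0_INR; auto).
 rewrite hterm_eq by auto.
 set (A := INR m * sinh (t / INR m)). set (B := INR m * sinh (t / 2 / INR m)).
 set (x := (2 * INR k + 1) * PI / 4 / INR m). set (C := INR m * sin x).
 set (c0 := (2 * INR k + 1) * PI / 12).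
 pose proof PI_RGT_0. pose proof PI_4. pose proof (pos_INR k).
 assert (HkR: 2 * INR k + 1 <= 2 * INR m).
 { assert (INR (S k) <= INR m) by (apply le_INR; lia). rewrite S_INR in H2. lra. }
 assert (Hx: 0 < x <= 2).
 { unfold x. split. apply Rdiv_lt_0_compat; auto; nra.
   apply Rmult_le_reg_r with (INR m); auto. field_simplify; try lra. nra. }
 assert (HC: c0 <= C).
 { unfold C, c0. pose proof (sin_ge_third x ltac:(lra)).
   replace ((2 * INR k + 1) * PI / 12) with (INR m * (x / 3)) by (unfold x; field; lra). nra. }
 assert (Hc0: 0 < c0) by (unfold c0; nra).
 assert (HA0: 0 <= A) by (unfold A; apply Rmult_le_pos; [lra|apply sinh_nonneg; left; apply Rdiv_lt_0_compat; auto]).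
 assert (HA1: A <= sinh t).
 { unfold A. pose proof (sinh_mult_le (t / INR m) m ltac:(left; apply Rdiv_lt_0_compat; auto)).
   replace (INR m * (t / INR m)) with t in H2 by (field; lra). auto. }
 assert (HD: 2 * c0 ^ 2 <= 2 * B ^ 2 + 2 * C ^ 2).
 { pose proof (pow2_ge_0 B). simpl. nra. }
 assert (0 < 2 * c0 ^ 2) by (simpl; nra).
 split. apply Rdiv_le_0_compat; lra.
 unfold Rdiv. apply Rmult_le_compat; auto. left; apply Rinv_0_lt_compat; lra.
 apply Rinv_le_contravar; lra.
Qed.

Lemma ex_series_odd : ex_series (fun k => / (2 * INR k + 1) ^ 2).
Proof.
 set (b := fun k : nat => 2 * (/ (INR k + 1) - / (INR k + 2))).
 assert (Hb: is_series b 2).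
 { assert (E: forall n, fsum b n = 2 - 2 / (INR n + 1)).
   { induction n. simpl. field. simpl fsum. rewrite IHn. unfold b. rewrite S_INR.
     pose proof (pos_INR n). field. split; lra. }
   apply is_series_fsum. intros e He. destruct (INR_unbounded (2 / e)) as [N HN].
   exists N. intros n Hn. rewrite E. replace (2 - 2 / (INR n + 1) - 2) with (- (2 / (INR n + 1))) by ring.
   rewrite Rabs_Ropp. pose proof (pos_INR n). assert (INR N <= INR n) by (apply le_INR; lia).
   rewrite Rabs_pos_eq by (apply Rdiv_le_0_compat; lra).
   apply Rmult_lt_reg_r with ((INR n + 1) / e). apply Rdiv_lt_0_compat; lra.
   field_simplify; try lra. }
 apply (@ex_series_le R_AbsRing R_CompleteNormedModule _ b). 2:{ exists 2; auto. }
 intros k. change (norm (/ (2 * INR k + 1) ^ 2)) with (Rabs (/ (2 * INR k + 1) ^ 2)). pose proof (pos_INR k).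
 rewrite Rabs_pos_eq by (left; apply Rinv_0_lt_compat; apply pow_lt; lra).
 unfold b. apply Rmult_le_reg_r with ((2 * INR k + 1) ^ 2 * ((INR k + 1) * (INR k + 2))).
 apply Rmult_lt_0_compat; [apply pow_lt|]; nra.
 field_simplify; try lra; try nra; try (split; lra).
Qed.

Lemma tanh_series_pos t : 0 < t ->
  is_series (fun k => 8 * t / (4 * t ^ 2 + ((2 * INR k + 1) * PI) ^ 2)) (tanh t).
Proof. intros Ht.
 apply (tannery (hterm t) _ (fun k => sinh t / (2 * ((2 * INR k + 1) * PI / 12) ^ 2))).
 - apply (ex_series_ext (fun k => scal (sinh t * 72 / PI ^ 2) (/ (2 * INR k + 1) ^ 2))).
   + intros k. unfold scal; simpl. unfold mult; simpl. pose proof PI_RGT_0. pose proof (pos_INR k).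
     field. split; nra.
   + apply (@ex_series_scal R_AbsRing R_NormedModule). apply ex_series_odd.
 - intros m k Hk. destruct (hterm_bound t m k Ht Hk). rewrite Rabs_pos_eq; lra.
 - intros k. apply hterm_lim; auto.
 - intros m Hm. symmetry. apply tanh_finite; auto.
Qed.

Lemma tanh_series t :
  is_series (fun k => 8 * t / (4 * t ^ 2 + ((2 * INR k + 1) * PI) ^ 2)) (tanh t).
Proof. destruct (Rtotal_order t 0) as [Hn|[->|Hp]].
 - pose proof (tanh_series_pos (- t) ltac:(lra)) as H. apply is_series_opp in H.
   replace (tanh t) with (opp (tanh (- t))).
   + eapply is_series_ext; [|exact H]. intros k. unfold opp; simpl. pose proof PI_RGT_0. pose proof (pos_INR k).
     field. nra.
   + unfold opp; simpl. unfold tanh, sinh, cosh. rewrite Ropp_involutive.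
     assert (0 < exp t + exp (- t)) by (pose proof (exp_pos t); pose proof (exp_pos (- t)); lra). field. lra.
 - replace (tanh 0) with 0. eapply is_series_ext; [|exact is_series_zero]. intros k. simpl. field.
   pose proof PI_RGT_0. pose proof (pos_INR k). nra.
   unfold tanh. rewrite sinh_0. unfold Rdiv; ring.
 - apply tanh_series_pos; auto.
Qed.

Lemma series_abs_le (a b : nat -> R) (la lb : R) : is_series a la -> is_series b lb ->
  (forall k, Rabs (a k) <= b k) -> Rabs la <= lb.
Proof. intros Ha Hb H. destruct (Rle_dec (Rabs la) lb) as [|Hn]; auto. exfalso.
 set (e := (Rabs la - lb) / 2).
 destruct (is_series_fsum_conv _ _ Ha e) as [N1 H1]. unfold e; lra.
 destruct (is_series_fsum_conv _ _ Hb e) as [N2 H2]. unfold e; lra.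
 specialize (H1 (max N1 N2) ltac:(lia)). specialize (H2 (max N1 N2) ltac:(lia)).
 set (n := max N1 N2) in *.
 pose proof (fsum_abs a n). assert (fsum (fun i => Rabs (a i)) n <= fsum b n) by (apply fsum_le; auto).
 apply Rabs_def2 in H2. pose proof (Rabs_triang_inv la (fsum a n)).
 rewrite <- Rabs_Ropp in H1. replace (- (fsum a n - la)) with (la - fsum a n) in H1 by ring.
 unfold e in *. lra. Qed.

Lemma series_ge_partial (a : nat -> R) (l : R) n : is_series a l -> (forall k, 0 <= a k) -> fsum a n <= l.
Proof. intros Ha Hp. destruct (Rle_dec (fsum a n) l) as [|Hn]; auto. exfalso.
 destruct (is_series_fsum_conv _ _ Ha (fsum a n - l)) as [N HN]. lra.
 specialize (HN (max N n) ltac:(lia)).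
 replace (max N n) with (n + (max N n - n))%nat in HN by lia. rewrite fsum_split in HN.
 assert (0 <= fsum (fun i => a (n + i)%nat) (max N n - n)) by (apply fsum_nonneg; auto).
 apply Rabs_def2 in HN. lra. Qed.



Lemma is_series_tail (a : nat -> R) (l : R) N : is_series a l -> is_series (fun k => a (N + k)%nat) (l - fsum a N).
Proof. intros H. induction N.
 - simpl. eapply is_series_ext; [|replace (l - 0) with l by ring; exact H]. auto.
 - assert (H2: is_series (fun k => a (N + k)%nat) (plus (l - fsum a (S N)) (a (N + 0)%nat))).
   { replace (plus (l - fsum a (S N)) (a (N + 0)%nat)) with (l - fsum a N); auto.
     unfold plus; simpl. rewrite Nat.add_0_r. ring. }
   apply (@is_series_incr_1 R_AbsRing R_NormedModule (fun k => a (N + k)%nat)) in H2. eapply is_series_ext; [|exact H2]. intros k. simpl. f_equal. lia.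
Qed.

Lemma approx_geom (c : nat -> R) M g d :
  (forall n, Rabs (c n) <= M * (2/3) ^ n) ->
  (forall t, 0 < t < d -> is_series (fun n => c n * t ^ n) (g t)) ->
  forall N t, 0 < t < Rmin d (3/4) -> Rabs (g t - fsum (fun n => c n * t ^ n) N) <= 2 * M * (2/3) ^ N * t ^ N.
Proof. intros Hc Hs N t Ht.
 assert (Hd: 0 < t < d) by (pose proof (Rmin_l d (3/4)); lra).
 assert (Ht34: t < 3/4) by (pose proof (Rmin_r d (3/4)); lra).
 assert (HM: 0 <= M). { specialize (Hc O). simpl in Hc. pose proof (Rabs_pos (c O)). lra. }
 pose proof (is_series_tail _ _ N (Hs t Hd)) as HT.
 set (r := 2 / 3 * t).
 assert (Hr: 0 < r < 1/2) by (unfold r; lra).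
 assert (HG: is_series (fun k => r ^ k * (M * (2/3) ^ N * t ^ N)) (/ (1 - r) * (M * (2/3) ^ N * t ^ N))).
 { apply is_series_scal_r. apply is_series_geom. rewrite Rabs_pos_eq; lra. }
 pose proof (series_abs_le _ _ _ _ HT HG) as HL.
 assert (0 <= M * (2/3) ^ N * t ^ N).
 { apply Rmult_le_pos; [apply Rmult_le_pos|]; auto; apply pow_le; lra. }
 eapply Rle_trans. apply HL.
 - intros k. rewrite Rabs_mult. rewrite (Rabs_pos_eq (t ^ _)) by (apply pow_le; lra).
   eapply Rle_trans. apply Rmult_le_compat_r. apply pow_le; lra. apply Hc.
   unfold r. rewrite !pow_add, Rpow_mult_distr. right; ring.
 - assert (/ (1 - r) <= 2). { replace 2 with (/ (1/2)) by field. apply Rinv_le_contravar; lra. }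
   replace (2 * M * (2 / 3) ^ N * t ^ N) with (2 * (M * (2/3) ^ N * t ^ N)) by ring.
   apply Rmult_le_compat_r; auto.
Qed.

Lemma pow_le_decr t m n : 0 <= t <= 1 -> (m <= n)%nat -> t ^ n <= t ^ m.
Proof. intros Ht Hmn. replace n with (m + (n - m))%nat by lia. rewrite pow_add.
 assert (0 <= t ^ m) by (apply pow_le; lra). assert (t ^ (n - m) <= 1) by (rewrite <- (pow1 (n - m)); apply pow_incr; lra).
 assert (0 <= t ^ (n - m)) by (apply pow_le; lra). nra. Qed.

Lemma poly_tail (c : nat -> R) t N d : 0 < t <= 1 ->
  Rabs (fsum (fun n => c n * t ^ n) (N + d) - fsum (fun n => c n * t ^ n) N) <= fsum (fun n => Rabs (c n)) (N + d) * t ^ N.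
Proof. intros Ht. rewrite fsum_split. replace (_ + _ - _) with (fsum (fun i => c (N + i)%nat * t ^ (N + i)) d) by ring.
 eapply Rle_trans. apply fsum_abs.
 apply Rle_trans with (fsum (fun i => Rabs (c (N + i)%nat)) d * t ^ N).
 - rewrite Rmult_comm, <- fsum_scal. apply fsum_le. intros i _. rewrite Rabs_mult.
   rewrite (Rabs_pos_eq (t ^ _)) by (apply pow_le; lra).
   pose proof (Rabs_pos (c (N + i)%nat)). pose proof (pow_le_decr t N (N + i) ltac:(lra) ltac:(lia)). nra.
 - rewrite fsum_split. assert (0 <= fsum (fun n => Rabs (c n)) N) by (apply fsum_nonneg; intros; apply Rabs_pos).
   assert (0 <= t ^ N) by (apply pow_le; lra). nra.
Qed.

Lemma poly_zero (d : nat -> R) :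
  (forall N, exists K dl, 0 < dl /\ forall t, 0 < t < dl -> Rabs (fsum (fun n => d n * t ^ n) N) <= K * t ^ N) ->
  forall n, d n = 0.
Proof. intros H n. induction n as [n IH] using (well_founded_induction lt_wf).
 destruct (H (S n)) as [K [dl [Hdl HK]]].
 assert (E: forall t, fsum (fun i => d i * t ^ i) (S n) = d n * t ^ n).
 { intros t. simpl. rewrite (fsum_ext _ (fun _ => 0)). rewrite fsum_const. ring. intros i Hi. rewrite IH; auto. ring. }
 destruct (Req_dec (d n) 0) as [|Hn]; auto. exfalso.
 assert (Hp: 0 < Rabs (d n)) by (apply Rabs_pos_lt; auto).
 set (t := Rmin (dl / 2) (Rabs (d n) / (2 * (Rabs K + 1)))).
 assert (HKp: 0 < 2 * (Rabs K + 1)) by (pose proof (Rabs_pos K); lra).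
 assert (Ht: 0 < t). { unfold t. apply Rmin_glb_lt. lra. apply Rdiv_lt_0_compat; lra. }
 assert (Ht2: t <= Rabs (d n) / (2 * (Rabs K + 1))) by apply Rmin_r.
 assert (Ht1: t < dl) by (pose proof (Rmin_l (dl/2) (Rabs (d n) / (2 * (Rabs K + 1)))); unfold t in *; lra).
 specialize (HK t (conj Ht Ht1)). rewrite E, Rabs_mult, (Rabs_pos_eq (t ^ n)) in HK by (apply pow_le; lra).
 simpl pow in HK. assert (0 < t ^ n) by (apply pow_lt; auto).
 assert (Rabs (d n) <= K * t) by nra.
 assert (K * t <= Rabs K * t) by (pose proof (Rle_abs K); nra).
 assert (Rabs K * t <= Rabs (d n) / 2).
 { apply Rle_trans with (Rabs K * (Rabs (d n) / (2 * (Rabs K + 1)))).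
   apply Rmult_le_compat_l; auto; apply Rabs_pos.
   apply Rmult_le_reg_r with (2 * (Rabs K + 1)); auto. pose proof (Rabs_pos K). field_simplify; try lra; nra. }
 lra.
Qed.

Lemma fsum_S f n : fsum f (S n) = fsum f n + f n.
Proof. reflexivity. Qed.

Definition ak (k : nat) : R := (2 * INR k + 1) * PI.
Definition Zs (j : nat) : R := Series (fun k => / ak k ^ (2 * j + 2)).

Lemma ak_ge1 k : 1 <= ak k.
Proof. unfold ak. pose proof (pos_INR k). pose proof PI2_3_2. nra. Qed.

Lemma ex_Zs j : ex_series (fun k => / ak k ^ (2 * j + 2)).
Proof. apply (@ex_series_le R_AbsRing R_CompleteNormedModule _ (fun k => / (2 * INR k + 1) ^ 2)).
 2: apply ex_series_odd.
 intros k. change (norm (/ ak k ^ (2 * j + 2))) with (Rabs (/ ak k ^ (2 * j + 2))).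
 pose proof (ak_ge1 k). pose proof (pos_INR k).
 assert (0 < ak k ^ (2 * j + 2)) by (apply pow_lt; lra).
 rewrite Rabs_pos_eq by (left; apply Rinv_0_lt_compat; auto).
 apply Rinv_le_contravar. apply pow_lt; lra.
 apply Rle_trans with (ak k ^ 2). apply pow_incr. split; [lra|]. unfold ak. pose proof PI2_3_2. nra.
 apply Rle_pow; auto; lia. Qed.

Lemma F_series t : t <> 0 -> is_series (fun k => 8 / (ak k ^ 2 + 4 * t ^ 2)) (tanh t / t).
Proof. intros Ht. pose proof (is_series_scal_r (/ t) _ _ (tanh_series t)) as H.
 eapply is_series_ext; [|exact H]. intros k. simpl. unfold ak.
 pose proof (pos_INR k). pose proof PI_RGT_0. assert (0 < t * t) by nra. field. nra.
Qed.

Lemma rem_id a x K : a <> 0 -> a ^ 2 + x <> 0 ->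
  8 / (a ^ 2 + x) - fsum (fun j => 8 * (- x) ^ j * / a ^ (2 * j + 2)) K = 8 * (- x) ^ K / (a ^ (2 * K) * (a ^ 2 + x)).
Proof. intros Ha Hx. induction K as [|K IHN].
 - simpl. simpl in Hx. rewrite Rmult_1_r in Hx. field; auto.
 - transitivity ((8 / (a ^ 2 + x) - fsum (fun j => 8 * (- x) ^ j * / a ^ (2 * j + 2)) K) - 8 * (- x) ^ K * / a ^ (2 * K + 2)).
   rewrite fsum_S; ring. rewrite IHN.
   replace (2 * S K)%nat with (2 * K + 2)%nat by lia. rewrite !pow_add.
   assert (a ^ (2 * K) <> 0) by (apply pow_nonzero; auto). simpl in Hx. rewrite Rmult_1_r in Hx. simpl. field. repeat split; auto.
Qed.

Lemma rem_series t N : t <> 0 ->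
  is_series (fun k => 8 * (- (4 * t ^ 2)) ^ N / (ak k ^ (2 * N) * (ak k ^ 2 + 4 * t ^ 2)))
    (tanh t / t - fsum (fun j => 8 * (- (4 * t ^ 2)) ^ j * Zs j) N).
Proof. intros Ht.
 pose proof (F_series t Ht) as HF.
 pose proof (is_series_fsum_comm (fun j k => 8 * (- (4 * t ^ 2)) ^ j * / ak k ^ (2 * j + 2))
   (fun j => 8 * (- (4 * t ^ 2)) ^ j * Zs j) N) as HS.
 assert (H: forall j, is_series (fun k => 8 * (- (4 * t ^ 2)) ^ j * / ak k ^ (2 * j + 2)) (8 * (- (4 * t ^ 2)) ^ j * Zs j)).
 { intros j. apply (@is_series_scal_l R_AbsRing R_NormedModule (8 * (- (4 * t ^ 2)) ^ j)).
   apply Series_correct, ex_Zs. }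
 specialize (HS H). pose proof (is_series_minus _ _ _ _ HF HS) as HM.
 eapply is_series_ext; [|exact HM]. intros k. unfold plus, opp; simpl.
 rewrite <- rem_id. unfold Rminus; auto.
 pose proof (ak_ge1 k); lra. pose proof (ak_ge1 k). assert (0 <= t ^ 2) by (apply pow2_ge_0). nra.
Qed.

Lemma rem_bound t N : t <> 0 ->
  Rabs (tanh t / t - fsum (fun j => 8 * (- (4 * t ^ 2)) ^ j * Zs j) N) <= 8 * (4 * t ^ 2) ^ N * Zs N.
Proof. intros Ht. apply (series_abs_le _ (fun k => 8 * (4 * t ^ 2) ^ N * / ak k ^ (2 * N + 2)) _ _ (rem_series t N Ht)).
 - apply (@is_series_scal_l R_AbsRing R_NormedModule (8 * (4 * t ^ 2) ^ N)). apply Series_correct, ex_Zs.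
 - intros k. pose proof (ak_ge1 k). assert (0 <= t ^ 2) by apply pow2_ge_0.
   assert (Ha: 0 < ak k ^ (2 * N)) by (apply pow_lt; lra).
   assert (0 < ak k ^ 2) by (apply pow_lt; lra).
   assert (0 <= (4 * t ^ 2) ^ N) by (apply pow_le; lra).
   set (x := 4 * t ^ 2) in *. assert (Hx: 0 <= x) by (unfold x; lra).
   assert (E: Rabs (8 * (- x) ^ N / (ak k ^ (2 * N) * (ak k ^ 2 + x))) = 8 * x ^ N / (ak k ^ (2 * N) * (ak k ^ 2 + x))).
   { replace (- x) with ((-1) * x) by ring. rewrite Rpow_mult_distr.
     unfold Rdiv. rewrite !Rabs_mult, pow_1_abs, Rabs_inv.
     rewrite (Rabs_pos_eq 8), (Rabs_pos_eq (x ^ N)), (Rabs_pos_eq (_ * _)); try lra.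
     apply Rmult_le_pos; lra. }
   rewrite E. rewrite pow_add. unfold Rdiv. rewrite !Rmult_assoc. apply Rmult_le_compat_l. lra.
   apply Rmult_le_compat_l. lra.
   apply Rinv_le_contravar. nra. apply Rmult_le_compat_l; lra.
Qed.

Definition w (n : nat) : R :=
  match n with
  | O => 0 | S O => 0
  | S (S p) => if Nat.even p then 8 * (-4) ^ (Nat.div2 p) * Zs (Nat.div2 p) else 0
  end.

Lemma w_SS p : w (S (S p)) = if Nat.even p then 8 * (-4) ^ (Nat.div2 p) * Zs (Nat.div2 p) else 0.
Proof. reflexivity. Qed.

Lemma w_sum J t : fsum (fun n => w n * t ^ n) (2 * J + 2) = fsum (fun j => 8 * (-4) ^ j * Zs j * t ^ (2 * j + 2)) J.
Proof. induction J as [|J IH].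
 - simpl. ring.
 - replace (2 * S J + 2)%nat with (S (S (2 * J + 2))) by lia. rewrite !fsum_S, IH.
   replace (2 * J + 2)%nat with (S (S (2 * J))) by lia. rewrite !w_SS.
   replace (Nat.even (2 * J)) with true by (rewrite Nat.even_mul; reflexivity).
   replace (Nat.even (S (2 * J))) with false by (rewrite Nat.even_succ, Nat.odd_mul; reflexivity).
   rewrite Nat.div2_double. replace (S (S (2 * J))) with (2 * J + 2)%nat by lia. ring.
Qed.

Lemma approx_w N : exists K dl, 0 < dl /\ forall t, 0 < t < dl ->
  Rabs (t * tanh t - fsum (fun n => w n * t ^ n) N) <= K * t ^ N.
Proof. exists (8 * 4 ^ N * Zs N + fsum (fun n => Rabs (w n)) (N + (N + 2))), 1. split; [lra|].
 intros t Ht.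
 assert (E: t * tanh t - fsum (fun n => w n * t ^ n) (2 * N + 2) =
            t ^ 2 * (tanh t / t - fsum (fun j => 8 * (- (4 * t ^ 2)) ^ j * Zs j) N)).
 { rewrite w_sum. rewrite Rmult_minus_distr_l, <- fsum_scal.
   replace (t ^ 2 * (tanh t / t)) with (t * tanh t) by (simpl; field; lra). f_equal.
   apply fsum_ext. intros j _. rewrite pow_add.
   replace (- (4 * t ^ 2)) with ((-4) * t ^ 2) by ring. rewrite Rpow_mult_distr, <- pow_mult. ring. }
 pose proof (rem_bound t N ltac:(lra)) as HR.
 assert (HZ: 0 <= Zs N).
 { unfold Zs. apply Rle_trans with (Series (fun _ => 0)). rewrite (is_series_unique _ _ is_series_zero); lra.
   apply Series_le. intros k. split; [lra|]. left. apply Rinv_0_lt_compat. apply pow_lt. pose proof (ak_ge1 k); lra.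
   apply ex_Zs. }
 assert (H1: Rabs (t * tanh t - fsum (fun n => w n * t ^ n) (2 * N + 2)) <= 8 * 4 ^ N * Zs N * t ^ N).
 { rewrite E, Rabs_mult, Rabs_pos_eq by (apply pow2_ge_0).
   eapply Rle_trans. apply Rmult_le_compat_l. apply pow2_ge_0. apply HR.
   rewrite Rpow_mult_distr, <- pow_mult.
   assert (t ^ (2 * N) * t ^ 2 <= t ^ N).
   { rewrite <- pow_add. apply pow_le_decr; lra || lia. }
   assert (0 <= 8 * 4 ^ N * Zs N) by (apply Rmult_le_pos; [|lra]; apply Rmult_le_pos; [lra|apply pow_le; lra]).
   assert (0 <= t ^ (2 * N)) by (apply pow_le; lra). assert (0 <= t^2) by apply pow2_ge_0.
   replace (t ^ 2 * (8 * (4 ^ N * t ^ (2 * N)) * Zs N)) with ((8 * 4 ^ N * Zs N) * (t ^ (2 * N) * t ^ 2)) by ring.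
   apply Rmult_le_compat_l; auto. }
 pose proof (poly_tail w t N (N + 2) ltac:(lra)) as H2.
 replace (N + (N + 2))%nat with (2 * N + 2)%nat in * by lia.
 replace (t * tanh t - fsum (fun n => w n * t ^ n) N) with
   ((t * tanh t - fsum (fun n => w n * t ^ n) (2 * N + 2)) + (fsum (fun n => w n * t ^ n) (2 * N + 2) - fsum (fun n => w n * t ^ n) N)) by ring.
 eapply Rle_trans. apply Rabs_triang. rewrite Rmult_plus_distr_r. apply Rplus_le_compat; auto.
Qed.

Definition v (B : nat -> R) (n : nat) : R :=
  B n * (4 ^ n - 2 ^ n) / INR (fact n) + (if Nat.eqb n 1 then 1 else 0).

Lemma delta_series t : is_series (fun n => (if Nat.eqb n 1 then 1 else 0) * t ^ n) t.
Proof. apply is_series_fsum. intros e He. exists 2%nat. intros n Hn.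
 replace n with (S (S (n - 2))) by lia. generalize (n - 2)%nat as m. intros m.
 replace (fsum _ (S (S m))) with t. rewrite Rminus_diag_eq, Rabs_R0; auto.
 induction m. simpl. ring. rewrite fsum_S, <- IHm. simpl. ring. Qed.

Lemma tanh_identity t : 0 < t ->
  4 * t / (exp (4 * t) - 1) - 2 * t / (exp (2 * t) - 1) + t = t * tanh t.
Proof. intros Ht. set (e := exp t).
 assert (He: 1 < e) by (unfold e; rewrite <- exp_0; apply exp_increasing; auto).
 replace (exp (2 * t)) with (e * e) by (unfold e; rewrite <- exp_plus; f_equal; ring).
 replace (exp (4 * t)) with (e * e * (e * e)) by (unfold e; rewrite <- !exp_plus; f_equal; ring).
 unfold tanh, sinh, cosh. replace (exp (- t)) with (/ e) by (unfold e; rewrite exp_Ropp; auto).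
 fold e. assert (1 < e * e) by nra. assert (1 < e * e * (e * e)) by nra.
 field. repeat split; try lra. Qed.

Lemma v_series (B : nat -> R) (HB : bernoulli_gf B) t : 0 < t < 3/4 ->
  is_series (fun n => v B n * t ^ n) (t * tanh t).
Proof. intros Ht. pose proof PI2_3_2.
 assert (H4: is_series (fun n => B n * (4 * t) ^ n / INR (fact n)) (4 * t / (exp (4 * t) - 1))).
 { apply is_series_Reals. apply HB. lra. rewrite Rabs_pos_eq; lra. }
 assert (H2: is_series (fun n => B n * (2 * t) ^ n / INR (fact n)) (2 * t / (exp (2 * t) - 1))).
 { apply is_series_Reals. apply HB. lra. rewrite Rabs_pos_eq; lra. }
 pose proof (is_series_plus _ _ _ _ (is_series_minus _ _ _ _ H4 H2) (delta_series t)) as HH.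
 rewrite <- tanh_identity by lra.
 eapply is_series_ext; [|exact HH]. intros n. unfold plus, opp; simpl. unfold v.
 rewrite !Rpow_mult_distr. pose proof (INR_fact_neq_0 n). field; auto.
Qed.

Lemma seq_bounded (u : nat -> R) : is_lim_seq u 0 -> exists M, forall n, Rabs (u n) <= M.
Proof. intros H%is_lim_seq_Reals. destruct (H 1 ltac:(lra)) as [N HN].
 exists (1 + fsum (fun i => Rabs (u i)) N). intros n.
 assert (0 <= fsum (fun i => Rabs (u i)) N) by (apply fsum_nonneg; intros; apply Rabs_pos).
 destruct (le_lt_dec N n) as [Hn|Hn].
 - specialize (HN n Hn). unfold R_dist in HN. rewrite Rminus_0_r in HN. lra.
 - assert (forall m, (n < m)%nat -> Rabs (u n) <= fsum (fun i => Rabs (u i)) m).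
   { induction m; intros Hm. lia. rewrite fsum_S. destruct (Nat.eq_dec n m) as [->|Hne].
     assert (0 <= fsum (fun i => Rabs (u i)) m) by (apply fsum_nonneg; intros; apply Rabs_pos). lra.
     pose proof (IHm ltac:(lia)). pose proof (Rabs_pos (u m)). lra. }
   pose proof (H1 N Hn). lra.
Qed.

Lemma v_bound (B : nat -> R) (HB : bernoulli_gf B) : exists M, forall n, Rabs (v B n) <= M * (2/3) ^ n.
Proof. pose proof PI2_3_2.
 assert (H6: is_series (fun n => B n * 6 ^ n / INR (fact n)) (6 / (exp 6 - 1))).
 { apply is_series_Reals. apply HB. lra. rewrite Rabs_pos_eq; lra. }
 destruct (seq_bounded _ (ex_series_lim_0 _ (ex_intro _ _ H6))) as [Mb HMb].
 assert (HMb0: 0 <= Mb) by (specialize (HMb O); pose proof (Rabs_pos (B O * 6 ^ 0 / INR (fact 0))); lra).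
 exists (Mb + 2). intros n. unfold v.
 assert (A: Rabs (B n * (4 ^ n - 2 ^ n) / INR (fact n)) <= Mb * (2/3) ^ n).
 { assert (E: B n * (4 ^ n - 2 ^ n) / INR (fact n) = (B n * 6 ^ n / INR (fact n)) * ((4 ^ n - 2 ^ n) / 6 ^ n)).
   { pose proof (INR_fact_neq_0 n). assert (6 ^ n <> 0) by (apply pow_nonzero; lra). field; auto. }
   rewrite E, Rabs_mult. assert (0 < 6 ^ n) by (apply pow_lt; lra).
   assert (0 <= 2 ^ n <= 4 ^ n) by (split; [apply pow_le; lra|apply pow_incr; lra]).
   assert (Rabs ((4 ^ n - 2 ^ n) / 6 ^ n) <= (2/3) ^ n).
   { rewrite Rabs_pos_eq by (apply Rdiv_le_0_compat; lra).
     replace ((2/3) ^ n) with (4 ^ n / 6 ^ n). apply Rmult_le_compat_r. left; apply Rinv_0_lt_compat; lra. lra.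
     replace (2/3) with (4 * / 6) by field. rewrite Rpow_mult_distr, pow_inv. auto. }
   apply Rmult_le_compat; auto; apply Rabs_pos. }
 assert (0 <= (2/3) ^ n) by (apply pow_le; lra).
 eapply Rle_trans. apply Rabs_triang.
 destruct (Nat.eqb_spec n 1) as [->|Hn].
 - rewrite Rabs_R1. simpl in *. lra.
 - rewrite Rabs_R0. lra.
Qed.

Lemma coef_eq (B : nat -> R) (HB : bernoulli_gf B) : forall n, v B n = w n.
Proof.
 destruct (v_bound B HB) as [M HM].
 intros n. apply Rminus_diag_uniq. revert n.
 apply (poly_zero (fun n => v B n - w n)). intros N.
 destruct (approx_w N) as [K [dl [Hdl HK]]].
 exists (2 * M * (2/3) ^ N + K), (Rmin dl (3/4)). split. apply Rmin_glb_lt; lra.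
 intros t Ht.
 assert (Ht1: 0 < t < dl) by (pose proof (Rmin_l dl (3/4)); lra).
 assert (Ht2: 0 < t < Rmin (3/4) (3/4)) by (rewrite Rmin_left by lra; pose proof (Rmin_r dl (3/4)); lra).
 pose proof (approx_geom (v B) M (fun t => t * tanh t) (3/4) HM (fun t Ht => v_series B HB t Ht) N t Ht2) as H1.
 specialize (HK t Ht1). simpl in H1.
 rewrite (fsum_ext _ (fun n => v B n * t ^ n - w n * t ^ n)) by (intros; ring).
 rewrite fsum_minus.
 replace (fsum (fun n => v B n * t ^ n) N - fsum (fun n => w n * t ^ n) N) with
   ((t * tanh t - fsum (fun n => w n * t ^ n) N) + - (t * tanh t - fsum (fun n => v B n * t ^ n) N)) by ring.
 eapply Rle_trans. apply Rabs_triang. rewrite Rabs_Ropp. lra.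
Qed.

Lemma coef_formula (B : nat -> R) (HB : bernoulli_gf B) j :
  B (2 * j + 2)%nat * (4 ^ (2 * j + 2) - 2 ^ (2 * j + 2)) / INR (fact (2 * j + 2)) = 8 * (-4) ^ j * Zs j.
Proof. pose proof (coef_eq B HB (S (S (2 * j)))) as H. unfold v in H. rewrite w_SS in H.
 replace (Nat.even (2 * j)) with true in H by (rewrite Nat.even_mul; reflexivity).
 rewrite Nat.div2_double in H. replace (S (S (2 * j))) with (2 * j + 2)%nat in H by lia.
 replace (Nat.eqb (2 * j + 2) 1) with false in H by (symmetry; apply Nat.eqb_neq; lia).
 rewrite <- H. ring. Qed.

Lemma partial_eq (B : nat -> R) (HB : bernoulli_gf B) N t :
  tanh_partial B N t = fsum (fun j => 8 * (- (4 * t ^ 2)) ^ j * Zs j) N.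
Proof. induction N as [|N IH]. reflexivity.
 simpl tanh_partial. rewrite fsum_S, IH. f_equal. unfold tanh_term.
 replace (2 * S N)%nat with (2 * N + 2)%nat by lia. replace (2 * N + 2 - 2)%nat with (2 * N)%nat by lia.
 transitivity (8 * (-4) ^ N * Zs N * t ^ (2 * N)).
 - rewrite <- (coef_formula B HB N).
   replace (4 ^ (2 * N + 2)) with (2 ^ (2 * N + 2) * 2 ^ (2 * N + 2)) by (rewrite <- Rpow_mult_distr; f_equal; ring).
   pose proof (INR_fact_neq_0 (2 * N + 2)). field. auto.
 - replace (- (4 * t ^ 2)) with ((-4) * t ^ 2) by ring. rewrite Rpow_mult_distr, <- pow_mult. ring.
Qed.


Lemma main_sign (B : nat -> R) (HB : bernoulli_gf B) N t : t <> 0 ->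
  (-1) ^ N * (tanh t / t - tanh_partial B N t) > 0.
Proof. intros Ht. rewrite (partial_eq B HB).
 pose proof (rem_series t N Ht) as H.
 apply (is_series_scal_l ((-1) ^ N)) in H.
 set (x := 4 * t ^ 2) in *.
 assert (Hx: 0 < x) by (unfold x; pose proof (pow_lt t 2); assert (0 < t ^ 2) by (apply pow2_gt_0; auto); lra).
 assert (H': is_series (fun k => (-1) ^ N * (8 * (- x) ^ N / (ak k ^ (2 * N) * (ak k ^ 2 + x))))
    ((-1) ^ N * (tanh t / t - fsum (fun j => 8 * (- x) ^ j * Zs j) N))) by exact H.
 assert (Hpos: forall k, 0 < (-1) ^ N * (8 * (- x) ^ N / (ak k ^ (2 * N) * (ak k ^ 2 + x)))).
 { intros k. pose proof (ak_ge1 k).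
   replace ((-1) ^ N * (8 * (- x) ^ N / (ak k ^ (2 * N) * (ak k ^ 2 + x)))) with
     (8 * x ^ N / (ak k ^ (2 * N) * (ak k ^ 2 + x))).
   apply Rdiv_lt_0_compat. assert (0 < x ^ N) by (apply pow_lt; auto). lra.
   apply Rmult_lt_0_compat. apply pow_lt; lra. assert (0 < ak k ^ 2) by (apply pow_lt; lra). lra.
   replace x with ((-1) * (-1) * x) at 1 by ring.
   replace ((-1) * (-1) * x) with ((-1) * (- x)) by ring. rewrite Rpow_mult_distr. unfold Rdiv. ring. }
 pose proof (series_ge_partial _ _ 1 H' (fun k => Rlt_le _ _ (Hpos k))) as H1.
 assert (E1: forall f, fsum f 1 = f O) by (intros; simpl; ring). rewrite E1 in H1. specialize (Hpos O). lra.
Qed.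

Theorem corollary1 (B : nat -> R) (HB : bernoulli_gf B) :
  (forall (N : nat) (t : R), t <> 0 ->
     (-1) ^ N * (tanh t / t - tanh_partial B N t) > 0) /\
  (forall (m : nat) (t : R), (1 <= m)%nat -> t <> 0 ->
     tanh_partial B (2 * m)%nat t < tanh t / t /\
     tanh t / t < tanh_partial B (2 * m - 1)%nat t).
Proof. split.
 - intros N t Ht. apply main_sign; auto.
 - intros m t Hm Ht. split.
   + pose proof (main_sign B HB (2 * m) t Ht) as H. rewrite pow_1_even in H. lra.
   + pose proof (main_sign B HB (2 * m - 1) t Ht) as H.
     replace (2 * m - 1)%nat with (S (2 * (m - 1))) in H by lia. rewrite pow_1_odd in H.
     replace (2 * m - 1)%nat with (S (2 * (m - 1))) by lia. lra.
Qed.
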